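(* Let $\ell\ge 2$ and $n_1,\dots,n_\ell$ be positive integers, and let $G$ be the xor-product of the complete graphs $K_{n_1},\dots,K_{n_\ell}$. Then $\omega(G)\le n_1+\dots+n_\ell-\ell+1$.
   Context: The xor-product of graphs $G_1,\dots,G_\ell$ has vertex set $V(G_1)\times\dots\times V(G_\ell)$, two vertices $(g_1,\dots,g_\ell)$ and $(g'_1,\dots,g'_\ell)$ being adjacent iff the number of indices $i$ with $g_ig'_i\in E(G_i)$ is odd. $\omega$ denotes the clique number. *)

(* Defs.v *)
From mathcomp Require Import all_boot.
Set Implicit Arguments. Unset Strict Implicit. Unset Printing Implicit Defensive.

(* A simple graph on a finite type T is given by an adjacency relation
   (assumed symmetric and irreflexive where needed). *)

Definition complete_adj (n : nat) : rel 'I_n := fun x y => x != y.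

Definition xor_vertex (l : nat) (V : 'I_l -> finType) :=
  {dffun forall i : 'I_l, V i}.

Definition xor_adj (l : nat) (V : 'I_l -> finType)
    (E : forall i, rel (V i)) : rel (xor_vertex V) :=
  fun g g' => odd #|[pred i : 'I_l | E i (g i) (g' i)]|.

Definition is_clique (T : finType) (e : rel T) (K : {set T}) : bool :=
  [forall x in K, forall y in K, (x != y) ==> e x y].

Definition clique_number (T : finType) (e : rel T) : nat :=
  \max_(K : {set T} | is_clique e K) #|K|.

(* Main.v *)
Require Import Defs.
From mathcomp Require Import all_boot.
Set Implicit Arguments. Unset Strict Implicit. Unset Printing Implicit Defensive.


Lemma odd_card_xor (T : finType) (P : pred T) :
  odd #|[pred i | P i]| = \big[addb/false]_(i | P i) true.
Proof.
rewrite -sum1_card (big_morph odd oddD (erefl (odd 0))).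
by apply: eq_bigr.
Qed.

Lemma sum_eq_k (S m k : nat) : k < S.+1 ->
  \big[addb/false]_(a : 'I_S.+1 | (0 < a) && (a < m)) (nat_of_ord a == k) = (0 < k) && (k < m).
Proof.
move=> kS.
have [Hk|Hk] := boolP ((0 < k) && (k < m)).
- rewrite (bigD1 (Ordinal kS)) //= eqxx big1 //= => a /andP[_ Ha].
  apply/negbTE; apply: contra Ha => /eqP Hak; apply/eqP/val_inj; exact: Hak.
- rewrite big1 // => a Ha; apply/negbTE; apply: contra Hk => /eqP <-; exact: Ha.
Qed.

Definition VV (l : nat) (n : 'I_l -> nat) := xor_vertex (fun i : 'I_l => 'I_(n i)).
Definition SS (l : nat) (n : 'I_l -> nat) := \sum_(i < l) n i.
Definition XX (l : nat) (n : 'I_l -> nat) := ('I_l * 'I_(SS n).+1)%type.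
Definition PP (l : nat) (n : 'I_l -> nat) : {set XX n} :=
  [set p : XX n | (0 < p.2) && (p.2 < n p.1)].
Definition phi (l : nat) (n : 'I_l -> nat) (x : VV n) (p : XX n) : bool :=
  val p.2 == val (x p.1).
Definition Cg (l : nat) (n : 'I_l -> nat) (g : VV n) (p : XX n) : bool :=
  if val (g p.1) == 0 then true else (val p.2 == val (g p.1)).
Definition c0 (l : nat) (n : 'I_l -> nat) (g : VV n) : bool :=
  ~~ \big[addb/false]_(i < l) (val (g i) != 0).
Definition ff (l : nat) (n : 'I_l -> nat) (g x : VV n) : bool :=
  ~~ odd #|[pred i | g i != x i]|.

Lemma n_le_S (l : nat) (n : 'I_l -> nat) i : n i <= SS n.
Proof. by rewrite /SS (bigD1 i) //= leq_addr. Qed.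

Lemma eq3_helper (a b c : nat) : (a == b) && (a == c) = (a == b) && (b == c).
Proof. by case: eqP => [->|]. Qed.

Lemma row_lemma (l : nat) (n : 'I_l -> nat) (g x : VV n) (i : 'I_l) :
  (g i != x i) = (val (g i) != 0) (+)
    \big[addb/false]_(a : 'I_(SS n).+1 | (0 < a) && (a < n i)) (Cg g (i, a) && phi x (i, a)).
Proof.
have hG : val (g i) < (SS n).+1 by apply: leq_trans (ltn_ord _) (leq_trans (n_le_S n i) _).
have hY : val (x i) < (SS n).+1 by apply: leq_trans (ltn_ord _) (leq_trans (n_le_S n i) _).
rewrite /Cg /phi /=.
have [G0|GN] := boolP (nat_of_ord (g i) == 0).
- under eq_bigr do rewrite /=.
  rewrite sum_eq_k // ltn_ord andbT lt0n /= -val_eqE /= (eqP G0) eq_sym.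
  by [].
-   under eq_bigr do rewrite eq3_helper.
  rewrite -big_distrl /= sum_eq_k // ltn_ord andbT lt0n /=.
  by rewrite GN /=.
Qed.

Lemma ifTF_helper (b : bool) : (if b then true else false) = b.
Proof. by case: b. Qed.

Lemma key_lemma (l : nat) (n : 'I_l -> nat) (g x : VV n) :
  ff g x = c0 g (+) \big[addb/false]_(p in PP n) (Cg g p && phi x p).
Proof.
rewrite /ff /c0 odd_card_xor.
rewrite big_mkcond /=.
under eq_bigr => i _ do rewrite ifTF_helper.
under eq_bigr => i _ do rewrite row_lemma.
rewrite big_split /= -addNb; congr (_ (+) _).
rewrite pair_big_dep /=.
apply: eq_bigl => p; by rewrite inE.
Qed.

Definition FF (l : nat) (n : 'I_l -> nat) (S : {set VV n}) (x : VV n) : bool :=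
  \big[addb/false]_(g in S) ff g x.
Definition coef (l : nat) (n : 'I_l -> nat) (S : {set VV n}) : bool * {set XX n} :=
  (\big[addb/false]_(g in S) c0 g, [set p in PP n | \big[addb/false]_(g in S) Cg g p]).

Lemma F_coef (l : nat) (n : 'I_l -> nat) (S : {set VV n}) (x : VV n) :
  FF S x = (coef S).1 (+) \big[addb/false]_(p in (coef S).2) phi x p.
Proof.
rewrite /FF /coef /=.
under eq_bigr => g _ do rewrite key_lemma.
rewrite big_split /=; congr (_ (+) _).
rewrite exchange_big /=.
under eq_bigr => p _ do rewrite -big_distrl /=.
rewrite [RHS](eq_bigl (fun p => (p \in PP n) && \big[addb/false]_(g in S) Cg g p)); last first.
  by move=> p; rewrite inE.
rewrite big_mkcondr /=; apply: eq_bigr => p _.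
by case: (\big[addb/false]_(g in S) Cg g p).
Qed.

Lemma F_clique (l : nat) (n : 'I_l -> nat) (K S : {set VV n}) (h : VV n) :
  is_clique (xor_adj (V := fun i => 'I_(n i)) (fun i => @complete_adj (n i))) K ->
  S \subset K -> h \in K -> FF S h = (h \in S).
Proof.
move=> /forallP cK sSK hK.
have fhh : ff h h.
  rewrite /ff; suff -> : #|[pred i | h i != h i]| = 0 by [].
  by apply: eq_card0 => i; rewrite !inE /= eqxx.
have fgh g : g \in K -> g != h -> ff g h = false.
  move=> gK gh; move: (cK g); rewrite gK /= => /forallP /(_ h); rewrite hK gh /=.
  by rewrite /xor_adj /complete_adj /ff => ->.
rewrite /FF.
have [hS|hS] := boolP (h \in S).
- rewrite (bigD1 h) //= fhh big1 // => g /andP[gS gh].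
  by apply: fgh => //; apply: (subsetP sSK).
- rewrite big1 // => g gS; apply: fgh; first by apply: (subsetP sSK).
  by apply: contraNneq hS => <-.
Qed.
From mathcomp Require Import zify.

Lemma count_lt (N m : nat) : \sum_(a < m) (a.+1 < N : nat) = minn m (N.-1).
Proof.
elim: m => [|m IH]; first by rewrite big_ord0 min0n.
rewrite big_ord_recr /= IH.
case: ltnP => H /=; lia.
Qed.

Lemma card_PP (l : nat) (n : 'I_l -> nat) : #|PP n| = \sum_(i < l) (n i).-1.
Proof.
rewrite -sum1_card.
rewrite (eq_bigl (fun p : XX n => (p.1 \in predT) && ((0 < p.2) && (p.2 < n p.1)))); last first.
  by move=> p; rewrite inE.
rewrite -(pair_big_dep predT (fun i (a : 'I_(SS n).+1) => (0 < a) && (a < n i)) (fun _ _ => 1)) /=.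
apply: eq_bigr => i _.
rewrite big_mkcond big_ord_recl /=.
rewrite (eq_bigr (fun a : 'I_(SS n) => (a.+1 < n i : nat))); last first.
  by move=> a _; rewrite /bump /=; case: (_ < n i).
rewrite count_lt add0n.
have := n_le_S n i; lia.
Qed.

Lemma sum_pred (l : nat) (n : 'I_l -> nat) : (forall i, 0 < n i) ->
  \sum_(i < l) n i = \sum_(i < l) (n i).-1 + l.
Proof.
move=> npos.
rewrite (eq_bigr (fun i => (n i).-1 + 1)); last by move=> i _; rewrite addn1 prednK.
by rewrite big_split /= sum1_card card_ord.
Qed.

Theorem theorem3p1 (l : nat) (n : 'I_l -> nat) :
  2 <= l -> (forall i, 0 < n i) ->
  clique_number (xor_adj (V := fun i => 'I_(n i)) (fun i => @complete_adj (n i)))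
    <= (\sum_(i < l) n i) - l + 1.
Proof.
move=> _ npos; apply/bigmax_leqP => K cK.
have inj : {in powerset K &, injective (@coef l n)}.
  move=> S T; rewrite !inE => sSK sTK eqST; apply/setP => h.
  have [hK|hK] := boolP (h \in K).
  - by rewrite -(F_clique cK sSK hK) -(F_clique cK sTK hK) !F_coef eqST.
  - have hS : h \notin S by apply: contra hK => /(subsetP sSK).
    have hT : h \notin T by apply: contra hK => /(subsetP sTK).
    by rewrite (negbTE hS) (negbTE hT).
have sub : (@coef l n) @: powerset K \subset setX [set: bool] (powerset (PP n)).
  apply/subsetP => c /imsetP [S _ ->]; rewrite /coef in_setX in_setT /= inE.
  by apply/subsetP => p; rewrite inE => /andP[].
have := subset_leq_card sub.
rewrite card_in_imset // card_powerset cardsX cardsT card_bool card_powerset card_PP.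
rewrite -expnS leq_exp2l // (sum_pred npos).
by rewrite addnK addn1.
Qed.
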